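(* Fix $h\in\mathbb N$. Letting $n$ range over $\mathbb N^+$ and $u,v$ over $\mathfrak S_n$, there are only finitely many isomorphism classes of $h$-flipclasses.
   Context: $\mathfrak S_n$ is the symmetric group on $[n]$, $T$ its transpositions, $\ell$ the length w.r.t. simple transpositions. The Bruhat graph $B(\mathfrak S_n)$ has an edge $x\xrightarrow{t}y$ iff $yx^{-1}=t\in T$ and $\ell(x)<\ell(y)$; $P_h(u,v)$ is the set of paths $u=x_0\to\cdots\to x_h=v$ of length $h$. Between two fixed vertices there are $0$ or $2$ paths of length $2$, each the flip of the other; the $i$-th flip operator $f_i$ ($i\in[h-1]$) on $P_h(u,v)$ replaces $x_{i-1}\to x_i\to x_{i+1}$ by its flip; an $h$-flipclass of $\mathfrak S_n$ is an orbit of $\langle f_1,\dots,f_{h-1}\rangle$ on some $P_h(u,v)$. Isomorphism: for an $h$-flipclass $F$ of $\mathfrak S_n$ and an $h$-flipclass $F'$ of $\mathfrak S_m$, an isomorphism from $F$ to $F'$ is a pair $(f,g)$ where $f$ is a bijection from the set of permutations occurring on paths of $F$ onto that for $F'$ such that applying $f$ vertexwise gives a bijection $F\to F'$ commuting with the flip operators; $g$ is a bijection from the set of transpositions labelling edges of paths of $F$ onto that for $F'$ such that if $\Gamma\in F$ has label sequence $(t_1,\dots,t_h)$ then its image has label sequence $(g(t_1),\dots,g(t_h))$; and $g$ is order-preserving for the lexicographic orders on transpositions ($(a,b)<(c,d)$, with $a<b$, $c<d$, iff $a<c$, or $a=c$ and $b<d$). *)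

(* Defs.v *)
From mathcomp Require Import all_boot all_fingroup.
From mathcomp Require Import zify.
Set Implicit Arguments.
Unset Strict Implicit.
Unset Printing Implicit Defensive.

(* Coxeter length of a permutation of 'I_n w.r.t. simple transpositions *)
(* (i, i+1): the least k such that x is a product of k of them.        *)

Definition adjw n (w : seq ('I_n * 'I_n)) :=
  all (fun p : 'I_n * 'I_n => val p.2 == (val p.1).+1) w.

Definition wprod n (w : seq ('I_n * 'I_n)) : {perm 'I_n} :=
  (\prod_(p <- w) tperm p.1 p.2)%g.

Definition has_word n (x : {perm 'I_n}) (k : nat) : bool :=
  [exists w : k.-tuple ('I_n * 'I_n), adjw w && (wprod w == x)].

Lemma tperm_adj n (a b : 'I_n) : exists w, adjw w && (wprod w == tperm a b).
Proof.
wlog le_ab : a b / a <= b.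
  move=> H; case: (leqP a b) => h; first exact: H.
  by rewrite tpermC; apply: H; apply: ltnW.
move Hd: (b - a) => d; elim: d b le_ab Hd => [|d IH] b le_ab Hd.
  have -> : b = a by apply: ord_inj; move: le_ab Hd; lia.
  by exists [::]; rewrite /wprod big_nil tperm1 eqxx.
have lt_ab : a < b by move: Hd; lia.
have Hc : (nat_of_ord b).-1 < n by have := ltn_ord b; lia.
pose c : 'I_n := Ordinal Hc.
have Hbc : nat_of_ord b = (nat_of_ord c).+1 by rewrite /=; move: lt_ab; lia.
case: d IH Hd => [|d] IH Hd.
  have Hac : c = a.
    apply: ord_inj; rewrite /c /=; move: Hd lt_ab. lia.
  by exists [:: (a, b)]; rewrite /adjw /wprod big_seq1 /= -Hac Hbc !eqxx.
have le_ac : a <= c by move: lt_ab Hbc; lia.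
have Hd' : c - a = d.+1.
  by move: Hbc Hd le_ac; lia.
have [w /andP[Hw /eqP Pw]] := IH c le_ac Hd'.
exists ((c, b) :: w ++ [:: (c, b)]).
rewrite /adjw /= all_cat /= -/(adjw w) Hw Hbc eqxx /=.
rewrite /wprod big_cons big_cat big_seq1 /= -/(wprod w) Pw.
have -> : (tperm c b * (tperm a c * tperm c b) = tperm a c ^ tperm c b)%g.
  by rewrite /conjg tpermV mulgA.
rewrite tpermJ tpermL tpermD //.
- by apply/eqP => E; move: (congr1 (@nat_of_ord n) E) le_ac Hbc => /=; lia.
- by apply/eqP => E; move: (congr1 (@nat_of_ord n) E) lt_ab => /=; lia.
Qed.

Lemma has_word_ex n (x : {perm 'I_n}) : exists k, has_word x k.
Proof.
have [ts -> _] := prod_tpermP x.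
suff [w [Hw Hp]] : exists w, adjw w /\ wprod w = (\prod_(t <- ts) tperm t.1 t.2)%g.
  by exists (size w); apply/existsP; exists (in_tuple w); rewrite /= Hw Hp eqxx.
elim: ts => [|t ts [w [Hw Hp]]]; first by exists [::]; rewrite /wprod !big_nil.
have [w1 /andP[H1 /eqP P1]] := tperm_adj t.1 t.2.
exists (w1 ++ w); split; first by rewrite /adjw all_cat -/(adjw w1) -/(adjw w) H1 Hw.
by rewrite /wprod big_cat big_cons /= -/(wprod w1) -/(wprod w) P1 Hp.
Qed.

Definition ell n (x : {perm 'I_n}) : nat := ex_minn (has_word_ex x).

Definition is_transp n (t : {perm 'I_n}) : bool :=
  [exists a : 'I_n, exists b : 'I_n, (a != b) && (t == tperm a b)].

(* label of the edge x -> y : the permutation  y x^{-1}  (as functions,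
   apply x^{-1} first); in MathComp (s * t) z = t (s z), so this is
   (x^-1 * y)%g. *)
Definition blabel n (x y : {perm 'I_n}) : {perm 'I_n} := (x^-1 * y)%g.

Definition bedge n (x y : {perm 'I_n}) : bool :=
  is_transp (blabel x y) && (ell x < ell y).

(* Paths of length h: vertex sequences x_0, ..., x_h                   *)

Notation hpath h n := {ffun 'I_h.+1 -> {perm 'I_n}}.

Definition src h (k : 'I_h) : 'I_h.+1 := widen_ord (leqnSn h) k.
Definition tgt h (k : 'I_h) : 'I_h.+1 := lift ord0 k.

Definition is_bpath h n (G : hpath h n) : bool :=
  [forall k : 'I_h, bedge (G (src k)) (G (tgt k))].

Definition Ph h n (u v : {perm 'I_n}) : {set hpath h n} :=
  [set G | [&& is_bpath G, G ord0 == u & G ord_max == v]].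

(* The i-th flip operator (meaningful for 0 < i < h): replaces the
   middle vertex x_i of x_{i-1} -> x_i -> x_{i+1} by the middle vertex
   of the other length-2 path between x_{i-1} and x_{i+1}. *)
Definition flip h n (i : 'I_h.+1) (G : hpath h n) : hpath h n :=
  if (0 < i) && (i < h) then
    match [pick z | [&& z != G i, bedge (G (inord i.-1)) z
                                 & bedge z (G (inord i.+1))]] with
    | Some z => [ffun k => if k == i then z else G k]
    | None => G
    end
  else G.

Definition flipstep h n (G G' : hpath h n) : bool :=
  [exists i : 'I_h.+1, [&& 0 < i, i < h & G' == flip i G]].

(* orbit of G under the group generated by f_1, ..., f_{h-1} *)
Definition flip_orbit h n (G : hpath h n) : {set hpath h n} :=
  [set G' | connect (@flipstep h n) G G'].

Definition is_flipclass h n (F : {set hpath h n}) : Prop :=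
  exists (u v : {perm 'I_n}) (G : hpath h n), G \in Ph h u v /\ F = flip_orbit G.

Definition fverts h n (F : {set hpath h n}) : {set {perm 'I_n}} :=
  [set x | [exists G in F, exists k, G k == x]].

Definition flabels h n (F : {set hpath h n}) : {set {perm 'I_n}} :=
  [set t | [exists G in F, exists k : 'I_h, t == blabel (G (src k)) (G (tgt k))]].

Definition mapP h n m (f : {perm 'I_n} -> {perm 'I_m}) (G : hpath h n) : hpath h m :=
  [ffun k => f (G k)].

Definition tlt n (t t' : {perm 'I_n}) : bool :=
  [exists a : 'I_n, exists b : 'I_n, exists c : 'I_n, exists d : 'I_n,
     [&& a < b, c < d, t == tperm a b, t' == tperm c d &
         (a < c) || ((a == c) && (b < d))]].

Definition flip_iso h n m (F : {set hpath h n}) (F' : {set hpath h m}) : Prop :=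
  exists (f : {perm 'I_n} -> {perm 'I_m}) (g : {perm 'I_n} -> {perm 'I_m}),
    [/\ ({in fverts F &, injective f} /\ f @: fverts F = fverts F'),
        ({in F &, injective (mapP f)} /\ (mapP f) @: F = F'),
        (forall G, G \in F -> forall i : 'I_h.+1, 0 < i -> i < h ->
            mapP f (flip i G) = flip i (mapP f G)),
        ({in flabels F &, injective g} /\ g @: flabels F = flabels F')
      & (forall G, G \in F -> forall k : 'I_h,
            blabel (mapP f G (src k)) (mapP f G (tgt k))
            = g (blabel (G (src k)) (G (tgt k))))
        /\ (forall t1 t2, t1 \in flabels F -> t2 \in flabels F ->
           tlt t1 t2 -> tlt (g t1) (g t2))].

(* Main.v *)
Require Import Defs.
From mathcomp Require Import all_boot all_order all_fingroup zify.
Require Import Defs.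
Set Implicit Arguments.
Unset Strict Implicit.
Unset Printing Implicit Defensive.

Definition Ninv n (s : {perm 'I_n}) : nat :=
  \sum_(c : 'I_n) \sum_(d : 'I_n) ((c < d) && (s d < s c)).

Lemma decomp n (F : 'I_n -> 'I_n -> nat) (a b : 'I_n) : a != b ->
  \sum_c \sum_d F c d =
  F a a + F a b + F b a + F b b +
  \sum_(w | (w != a) && (w != b)) (F a w + F b w + F w a + F w b) +
  \sum_(c | (c != a) && (c != b)) \sum_(d | (d != a) && (d != b)) F c d.
Proof.
move=> ab.
have H1 : forall X : 'I_n -> nat, \sum_c X c = X a + X b + \sum_(c | (c != a) && (c != b)) X c.
  move=> X; rewrite (bigD1 a) //= (bigD1 b) /=; last by rewrite eq_sym.
  rewrite addnA; congr (_ + _); apply: eq_bigl => c; by rewrite andbC.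
rewrite (H1 (fun c => \sum_d F c d)) (H1 (F a)) (H1 (F b)).
rewrite [X in _ + X = _](eq_bigr (fun c => F c a + F c b + \sum_(d | (d != a) && (d != b)) F c d)); last by move=> c _; rewrite H1.
rewrite !big_split /=.
lia.
Qed.

Lemma Ninv_tperm n (q : {perm 'I_n}) (a b : 'I_n) : a < b -> q a < q b ->
  Ninv q < Ninv (tperm a b * q)%g /\
  ((forall w : 'I_n, ~~ ((a < w) && (w < b))) -> Ninv (tperm a b * q)%g = (Ninv q).+1).
Proof.
move=> ab qab.
have nab : a != b by apply/eqP => E; move: ab; rewrite E ltnn.
pose F1 := fun c d : 'I_n => nat_of_bool ((c < d) && (q d < q c)).
pose F2 := fun c d : 'I_n => nat_of_bool ((c < d) && ((tperm a b * q)%g d < (tperm a b * q)%g c)).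
have -> : Ninv q = \sum_c \sum_d F1 c d by [].
have -> : Ninv (tperm a b * q)%g = \sum_c \sum_d F2 c d by [].
rewrite (decomp F1 nab) (decomp F2 nab).
have ER : \sum_(c | (c != a) && (c != b)) \sum_(d | (d != a) && (d != b)) F2 c d
   = \sum_(c | (c != a) && (c != b)) \sum_(d | (d != a) && (d != b)) F1 c d.
  apply: eq_bigr => c /andP[ca cb]; apply: eq_bigr => d /andP[da db].
  by rewrite /F1 /F2 !permM !tpermD // eq_sym.
have qba : ~~ (q b < q a) by rewrite -leqNgt ltnW.
have V1 : F1 a a = 0 by rewrite /F1 ltnn.
have V2 : F1 a b = 0 by rewrite /F1 (negbTE qba) andbF.
have V3 : F1 b a = 0 by rewrite /F1 ltnNge ltnW.
have V4 : F1 b b = 0 by rewrite /F1 ltnn.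
have W1 : F2 a a = 0 by rewrite /F2 ltnn.
have W2 : F2 a b = 1 by rewrite /F2 !permM tpermL tpermR ab qab.
have W3 : F2 b a = 0 by rewrite /F2 ltnNge ltnW.
have W4 : F2 b b = 0 by rewrite /F2 ltnn.
have Hw : forall w, (w != a) && (w != b) ->
  F1 a w + F1 b w + F1 w a + F1 w b <= F2 a w + F2 b w + F2 w a + F2 w b /\
  (~~ ((a < w) && (w < b)) -> F1 a w + F1 b w + F1 w a + F1 w b = F2 a w + F2 b w + F2 w a + F2 w b).
  move=> w /andP[wa wb]; rewrite /F1 /F2 !permM tpermL tpermR tpermD 1?eq_sym //.
  have qwa : q w != q a by rewrite (inj_eq perm_inj).
  have qwb : q w != q b by rewrite (inj_eq perm_inj).
  have wa' : (w : nat) != a by [].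
  have wb' : (w : nat) != b by [].
  move: qwa qwb wa' wb'; set A := (a : nat); set B := (b : nat); set W := (w : nat).
  set QA := (q a : nat); set QB := (q b : nat); set QW := (q w : nat).
  rewrite -/QA -/QB in qab; rewrite -/A -/B in ab.
  split; lia.
have L : \sum_(w | (w != a) && (w != b)) (F1 a w + F1 b w + F1 w a + F1 w b)
      <= \sum_(w | (w != a) && (w != b)) (F2 a w + F2 b w + F2 w a + F2 w b).
  by apply: leq_sum => w Hw'; exact: (Hw w Hw').1.
split; first lia.
move=> Hmid.
have L2 : \sum_(w | (w != a) && (w != b)) (F1 a w + F1 b w + F1 w a + F1 w b)
      = \sum_(w | (w != a) && (w != b)) (F2 a w + F2 b w + F2 w a + F2 w b).
  by apply: eq_bigr => w Hw'; exact: ((Hw w Hw').2 (Hmid w)).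
lia.
Qed.

Lemma Ninv_inv n (s : {perm 'I_n}) : Ninv s^-1 = Ninv s.
Proof.
rewrite /Ninv (reindex_inj (@perm_inj _ s)).
have E : forall c : 'I_n, \sum_(d : 'I_n) ((s c < d) && ((s^-1)%g d < (s^-1)%g (s c)))
                       = \sum_(d : 'I_n) ((s c < s d) && (d < c)).
  by move=> c; rewrite (reindex_inj (@perm_inj _ s)); apply: eq_bigr => d _; rewrite !permK.
rewrite (eq_bigr _ (fun c _ => E c)) exchange_big /=.
apply: eq_bigr => c _; apply: eq_bigr => d _; by rewrite andbC.
Qed.

Lemma Ninv1 n : Ninv (1 : {perm 'I_n})%g = 0.
Proof.
by rewrite /Ninv big1 // => c _; rewrite big1 // => d _; rewrite !perm1; case: ltngtP.
Qed.

Lemma Ninv_adj n (W : {perm 'I_n}) (a b : 'I_n) : val b = (val a).+1 ->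
  Ninv (tperm a b * W)%g = (Ninv W).+1 \/ (Ninv (tperm a b * W)%g).+1 = Ninv W.
Proof.
move=> Hb.
have ab : a < b by rewrite Hb.
have Hmid : forall w : 'I_n, ~~ ((a < w) && (w < b)) by move=> w; have Hb2 : (b : nat) = (a : nat).+1 := Hb; rewrite Hb2; lia.
case: (ltngtP (W a) (W b)) => H.
- by left; exact: ((Ninv_tperm ab H).2 Hmid).
- right.
  have H' : (tperm a b * W)%g a < (tperm a b * W)%g b by rewrite !permM tpermL tpermR.
  have := (Ninv_tperm ab H').2 Hmid.
  by rewrite mulgA tperm2 mul1g => ->.
- have : a = b by apply: (@perm_inj _ W); apply: val_inj.
  by move=> E; move: ab; rewrite E ltnn.
Qed.

Lemma Ninv_word n (w : seq ('I_n * 'I_n)) : adjw w -> Ninv (wprod w) <= size w.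
Proof.
elim: w => [|p w IH]; first by rewrite /wprod big_nil Ninv1.
rewrite /adjw /= => /andP[/eqP Hp Hw].
rewrite /wprod big_cons -/(wprod w).
have := IH Hw.
case: (Ninv_adj (wprod w) Hp) => E; rewrite ?E; lia.
Qed.

Lemma incr_id n (x : {perm 'I_n}) : (forall c d : 'I_n, c < d -> x c < x d) -> x = 1%g.
Proof.
move=> Hx.
have Hge : forall (y : {perm 'I_n}), (forall c d : 'I_n, c < d -> y c < y d) -> forall i : 'I_n, i <= y i.
  move=> y Hy i; case: i => m; elim: m => [|m IH] Hm //=.
  have Hm' : m < n by lia.
  have := IH Hm'; have := Hy (Ordinal Hm') (Ordinal Hm) (ltnSn m); simpl; lia.
have Hinv : forall c d : 'I_n, c < d -> x^-1%g c < x^-1%g d.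
  move=> c d cd; case: (ltngtP (x^-1%g c) (x^-1%g d)) => // H.
    by have := Hx _ _ H; rewrite !permKV; lia.
  have : c = d by rewrite -(permKV x c) -(permKV x d); congr (x _); apply: val_inj.
  by move=> E; move: cd; rewrite E ltnn.
apply/permP => i; rewrite perm1; apply: val_inj => /=.
have h1 := Hge _ Hx i.
have h2 := Hge _ Hinv (x i).
rewrite permK in h2; lia.
Qed.

Lemma adj_incr n (x : {perm 'I_n}) :
  (forall a b : 'I_n, (b : nat) = (a : nat).+1 -> x a < x b) -> forall c d : 'I_n, c < d -> x c < x d.
Proof.
move=> H c d cd.
have : forall k (d : 'I_n), (d : nat) = c + k.+1 -> x c < x d.
  elim=> [|k IH] d' Hd; first by apply: H; rewrite Hd addn1.
  have Hm : c + k.+1 < n by have := ltn_ord d'; lia.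
  have := IH (Ordinal Hm) erefl.
  have := H (Ordinal Hm) d'; rewrite /= Hd => h; have := h ltac:(by rewrite addnS). lia.
move=> /(_ (d - c.+1) d); apply; lia.
Qed.

Lemma has_word_Ninv n (x : {perm 'I_n}) : has_word x (Ninv x).
Proof.
move Hm: (Ninv x) => m; elim: m x Hm => [|m IH] x Hm.
  have -> : x = 1%g.
    apply: incr_id => c d cd.
    case: (ltngtP (x c) (x d)) => // H.
      have : 0 < Ninv x.
        rewrite /Ninv (bigD1 c) //= (bigD1 d) //= cd H; lia.
      by rewrite Hm.
    have : c = d by apply: (@perm_inj _ x); apply: val_inj.
    by move=> E; move: cd; rewrite E ltnn.
  apply/existsP; exists [tuple]; by rewrite /adjw /wprod big_nil /=.
case: (boolP [exists a : 'I_n, exists b : 'I_n, (val b == (val a).+1) && (x b < x a)]).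
  move=> /existsP[a /existsP[b /andP[/eqP Hb Hxb]]].
  set x' := (tperm a b * x)%g.
  have Hx : x = (tperm a b * x')%g by rewrite /x' mulgA tperm2 mul1g.
  have Hx'm : Ninv x' = m.
    have H' : x' a < x' b by rewrite /x' !permM tpermL tpermR.
    have ab : a < b by rewrite Hb.
    have Hmid : forall w : 'I_n, ~~ ((a < w) && (w < b)) by move=> w; have Hb2 : (b : nat) = (a : nat).+1 := Hb; rewrite Hb2; lia.
    have := (Ninv_tperm ab H').2 Hmid; rewrite -Hx Hm; lia.
  have /existsP[w /andP[Hw /eqP Pw]] := IH x' Hx'm.
  apply/existsP; exists [tuple of (a, b) :: w].
  rewrite /adjw /= Hb eqxx /= -/(adjw w) Hw /wprod big_cons -/(wprod w) Pw -Hx.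
  by rewrite eqxx.
move=> Hn.
have Hinc : forall c d : 'I_n, c < d -> x c < x d.
  apply: adj_incr => a b Hb.
  case: (ltngtP (x a) (x b)) => // H.
    by move: Hn; rewrite negb_exists => /forallP/(_ a); rewrite negb_exists => /forallP/(_ b); have Hb2 : val b = (val a).+1 := Hb; rewrite Hb2 eqxx H.
  have : a = b by apply: (@perm_inj _ x); apply: val_inj.
  by move=> E; move: Hb; rewrite E; lia.
by move: Hm; rewrite (incr_id Hinc) Ninv1.
Qed.

Lemma ell_Ninv n (x : {perm 'I_n}) : ell x = Ninv x.
Proof.
rewrite /ell; case: ex_minnP => m Hm Hmin.
apply/eqP; rewrite eqn_leq (Hmin _ (has_word_Ninv x)) /=.
move: Hm => /existsP[w /andP[Hw /eqP Pw]].
by have := Ninv_word Hw; rewrite Pw size_tuple.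
Qed.

Lemma ell_up n (x : {perm 'I_n}) (p r : 'I_n) : p != r ->
  (ell x < ell (x * tperm p r)%g) = ((p < r) == (x^-1%g p < x^-1%g r)).
Proof.
have key : forall p r : 'I_n, p < r ->
  (ell x < ell (x * tperm p r)%g) = ((p < r) == (x^-1%g p < x^-1%g r)).
  move=> {}p {}r pr.
  rewrite !ell_Ninv -(Ninv_inv (x * tperm p r)%g) invMg tpermV -(Ninv_inv x) pr.
  set q := (x^-1)%g.
  case: (ltngtP (q p) (q r)) => H.
  - by rewrite (Ninv_tperm pr H).1.
  - have H' : (tperm p r * q)%g p < (tperm p r * q)%g r by rewrite !permM tpermL tpermR.
    have := (Ninv_tperm pr H').1; rewrite mulgA tperm2 mul1g => h.
    apply/negbTE; rewrite -leqNgt; exact: ltnW.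
  - have : p = r by apply: (@perm_inj _ q); apply: val_inj.
    by move=> E; move: pr; rewrite E ltnn.
move=> pr; case: (ltngtP p r) => H.
- by rewrite (key p r H) H.
- rewrite tpermC (key r p H) H.
  have : x^-1%g p != x^-1%g r by rewrite (inj_eq perm_inj).
  move: H; set P := (p : nat); set R := (r : nat); set QP := (x^-1%g p : nat); set QR := (x^-1%g r : nat).
  move=> H Hq; have Hq' : QP != QR by [].
  lia.
- by move: pr; rewrite (val_inj H) eqxx.
Qed.

Section B.
Variable n : nat.
Implicit Types (x y z : {perm 'I_n}) (a b c d e f p r v w : 'I_n).

Lemma tperm_uniq e f w v : tperm e f w = v -> w != v -> tperm e f = tperm w v.
Proof.
case: tpermP => [-> <- //|-> <- _|Hwe Hwf <-]; first by rewrite tpermC.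
by rewrite eqxx.
Qed.

Lemma two_moves e f w1 w3 :
  tperm e f w1 != w1 -> w3 != w1 -> w3 != tperm e f w1 -> tperm e f w3 != w3 -> False.
Proof.
move=> h1 h2 h3 h4.
have E := tperm_uniq (erefl (tperm e f w1)) ltac:(by rewrite eq_sym).
have h2' : w1 != w3 by rewrite eq_sym.
have h3' : tperm e f w1 != w3 by rewrite eq_sym.
by move: h4; rewrite E tpermD ?eqxx.
Qed.

Lemma supp_tt (rho : {perm 'I_n}) p r e f v :
  (forall u, tperm e f (tperm p r u) = rho u) -> rho v = v -> tperm p r v != v ->
  forall u, rho u = u.
Proof.
move=> H Hv Hm u.
have E1 : tperm e f = tperm (tperm p r v) v.
  apply: tperm_uniq; first by rewrite H.
  by [].
have E2 : tperm p r = tperm v (tperm p r v) by apply: tperm_uniq; rewrite // eq_sym.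
move: E1 E2; set w := tperm p r v => E1 E2.
by rewrite -H E1 E2 tpermC tpermK.
Qed.

Lemma bad_case (rho : {perm 'I_n}) p r e f w1 w3 :
  (forall u, tperm e f (tperm p r u) = rho u) ->
  w1 != p -> w1 != r -> w3 != p -> w3 != r -> w3 != w1 ->
  rho w1 != w1 -> rho w3 != w3 -> rho w1 != w3 -> False.
Proof.
move=> H h1 h2 h3 h4 h5 h6 h7 h8.
have E1 : tperm e f w1 = rho w1.
  by rewrite -H (@tpermD _ p r w1) //; rewrite eq_sym.
have E3 : tperm e f w3 = rho w3.
  by rewrite -H (@tpermD _ p r w3) //; rewrite eq_sym.
apply: (@two_moves e f w1 w3); rewrite ?E1 ?E3 //.
by rewrite eq_sym.
Qed.

Lemma tpermE' (T : finType) (x y z : T) : tperm x y z = if z == x then y else if z == y then x else z.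
Proof. by case: tpermP => [->|->|/eqP/negbTE-> /eqP/negbTE->]; rewrite ?eqxx //; case: eqP => // ->. Qed.

Ltac neqs := first [ done | rewrite eq_sym; done ].
Ltac tpsimpl :=
  rewrite ?tpermE';
  repeat (rewrite ?eqxx /=;
          match goal with
          | H : is_true (?x != ?y) |- context[?x == ?y] => rewrite (negbTE H)
          | H : is_true (?x != ?y) |- context[?y == ?x] => rewrite [y == x]eq_sym (negbTE H)
          end); rewrite ?eqxx /=; try neqs.

Lemma cand_disj a b c d p r e f :
  a != b -> c != d -> a != c -> a != d -> b != c -> b != d -> p != r ->
  (tperm p r * tperm e f = tperm a b * tperm c d)%g ->
  tperm p r = tperm a b \/ tperm p r = tperm c d.
Proof.
move=> ab cd ac ad bc bd pr EQ.
pose rho := (tperm a b * tperm c d)%g.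
have H : forall u, tperm e f (tperm p r u) = rho u by move=> u; rewrite -permM EQ.
have Rv : forall u, rho u = tperm c d (tperm a b u) by move=> u; rewrite permM.
have Ra : rho a != a by rewrite Rv; tpsimpl.
have inM : forall v, tperm p r v != v -> [|| v == a, v == b, v == c | v == d].
  move=> v Hv; apply/negPn/negP => Hn.
  have hva : v != a by apply: contraNneq Hn => ->; rewrite eqxx.
  have hvb : v != b by apply: contraNneq Hn => ->; rewrite eqxx orbT.
  have hvc : v != c by apply: contraNneq Hn => ->; rewrite eqxx !orbT.
  have hvd : v != d by apply: contraNneq Hn => ->; rewrite eqxx !orbT.
  have Rvv : rho v = v by rewrite Rv; tpsimpl.
  by move: Ra; rewrite (supp_tt H Rvv Hv) eqxx.
have Hp := inM p ltac:(by rewrite tpermL eq_sym).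
have Hr := inM r ltac:(by rewrite tpermR).
have ba : b != a by rewrite eq_sym.
have dc : d != c by rewrite eq_sym.
have ca : c != a by rewrite eq_sym.
have da : d != a by rewrite eq_sym.
have cb : c != b by rewrite eq_sym.
have db : d != b by rewrite eq_sym.
case/or4P: Hp => /eqP Ep; case/or4P: Hr => /eqP Er; subst p r;
  rewrite ?eqxx in pr; try done;
  try (by left; rewrite tpermC); try (by left); try (by right; rewrite tpermC); try (by right).
- by case: (@bad_case rho a c e f b d H); rewrite ?Rv; tpsimpl.
- by case: (@bad_case rho a d e f b c H); rewrite ?Rv; tpsimpl.
- by case: (@bad_case rho b c e f a d H); rewrite ?Rv; tpsimpl.
- by case: (@bad_case rho b d e f a c H); rewrite ?Rv; tpsimpl.
- by case: (@bad_case rho c a e f b d H); rewrite ?Rv; tpsimpl.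
- by case: (@bad_case rho c b e f a d H); rewrite ?Rv; tpsimpl.
- by case: (@bad_case rho d a e f b c H); rewrite ?Rv; tpsimpl.
- by case: (@bad_case rho d b e f a c H); rewrite ?Rv; tpsimpl.
Qed.

Lemma cand_share a b c p r e f :
  a != b -> b != c -> a != c -> p != r ->
  (tperm p r * tperm e f = tperm a b * tperm b c)%g ->
  [\/ tperm p r = tperm a b, tperm p r = tperm b c | tperm p r = tperm a c].
Proof.
move=> ab bc ac pr EQ.
pose rho := (tperm a b * tperm b c)%g.
have H : forall u, tperm e f (tperm p r u) = rho u by move=> u; rewrite -permM EQ.
have Rv : forall u, rho u = tperm b c (tperm a b u) by move=> u; rewrite permM.
have Ra : rho a != a by rewrite Rv; tpsimpl.
have inM : forall v, tperm p r v != v -> [|| v == a, v == b | v == c].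
  move=> v Hv; apply/negPn/negP => Hn.
  have hva : v != a by apply: contraNneq Hn => ->; rewrite eqxx.
  have hvb : v != b by apply: contraNneq Hn => ->; rewrite eqxx orbT.
  have hvc : v != c by apply: contraNneq Hn => ->; rewrite eqxx !orbT.
  have Rvv : rho v = v by rewrite Rv; tpsimpl.
  by move: Ra; rewrite (supp_tt H Rvv Hv) eqxx.
have Hp := inM p ltac:(by rewrite tpermL eq_sym).
have Hr := inM r ltac:(by rewrite tpermR).
case/or3P: Hp => /eqP Ep; case/or3P: Hr => /eqP Er; subst p r;
  rewrite ?eqxx in pr; try done;
  try (by constructor 1; rewrite // tpermC);
  try (by constructor 2; rewrite // tpermC);
  try (by constructor 3; rewrite // tpermC).
Qed.

Lemma perm_eq3 a b c : a != b -> b != c -> a != c ->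
  (tperm a b * tperm b c = tperm b c * tperm a c)%g /\
  (tperm a b * tperm b c = tperm a c * tperm a b)%g.
Proof.
move=> ab bc ac; split; apply/permP => u; rewrite !permM;
(case: (eqVneq u a) => [->|ua]; [tpsimpl | case: (eqVneq u b) => [->|ub]; [tpsimpl | case: (eqVneq u c) => [->|uc]; tpsimpl]]).
Qed.

Lemma edgeE x p r : p != r -> ell x < ell (x * tperm p r)%g ->
  (p < r) == (x^-1%g p < x^-1%g r).
Proof. by move=> pr; rewrite ell_up. Qed.

Lemma edgeE2 x t p r : p != r -> ell (x * t)%g < ell (x * t * tperm p r)%g ->
  (p < r) == (x^-1%g (t^-1%g p) < x^-1%g (t^-1%g r)).
Proof. by move=> pr; rewrite ell_up // invMg !permM. Qed.

Lemma share_contra x a b c : a != b -> b != c -> a != c ->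
  ell x < ell (x * tperm a b)%g -> ell (x * tperm a b)%g < ell (x * tperm a b * tperm b c)%g ->
  ell x < ell (x * tperm b c)%g -> ell (x * tperm b c)%g < ell (x * tperm b c * tperm a c)%g ->
  ell x < ell (x * tperm a c)%g -> ell (x * tperm a c)%g < ell (x * tperm a c * tperm a b)%g ->
  False.
Proof.
move=> ab bc ac h1 h2 h3 h4 h5 h6.
have ba : b != a by rewrite eq_sym.
have cb : c != b by rewrite eq_sym.
have ca : c != a by rewrite eq_sym.
move: (edgeE ab h1) (edgeE2 bc h2) (edgeE bc h3) (edgeE2 ac h4) (edgeE ac h5) (edgeE2 ab h6).
rewrite !tpermV; tpsimpl.
have qab : x^-1%g a != x^-1%g b by rewrite (inj_eq perm_inj).
have qbc : x^-1%g b != x^-1%g c by rewrite (inj_eq perm_inj).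
have qac : x^-1%g a != x^-1%g c by rewrite (inj_eq perm_inj).
move: qab qbc qac ab bc ac.
set A := (a : nat); set B := (b : nat); set C := (c : nat).
set QA := (x^-1%g a : nat); set QB := (x^-1%g b : nat); set QC := (x^-1%g c : nat).
move=> qab qbc qac ab' bc' ac'.
have : QA != QB by []. have : QB != QC by []. have : QA != QC by [].
have : A != B by []. have : B != C by []. have : A != C by [].
lia.
Qed.

Lemma bedgeE x z : bedge x z -> exists a b, [/\ a != b, z = (x * tperm a b)%g & ell x < ell z].
Proof.
move=> /andP[/existsP[a /existsP[b /andP[ab /eqP E]]] l].
by exists a, b; split => //; rewrite -E /blabel mulKVg.
Qed.

Lemma disj_main a b c d p1 r1 e1 f1 p2 r2 e2 f2 :
  a != b -> c != d -> a != c -> a != d -> b != c -> b != d -> p1 != r1 -> p2 != r2 ->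
  (tperm p1 r1 * tperm e1 f1 = tperm a b * tperm c d)%g ->
  (tperm p2 r2 * tperm e2 f2 = tperm a b * tperm c d)%g ->
  tperm p1 r1 != tperm a b -> tperm p2 r2 != tperm a b -> tperm p1 r1 = tperm p2 r2.
Proof.
move=> ab cd ac ad bc bd pr1 pr2 E1 E2 n1 n2.
case: (cand_disj ab cd ac ad bc bd pr1 E1) => h1; first by rewrite h1 eqxx in n1.
case: (cand_disj ab cd ac ad bc bd pr2 E2) => h2; first by rewrite h2 eqxx in n2.
by rewrite h1 h2.
Qed.

Lemma share_main x a b c p1 r1 e1 f1 p2 r2 e2 f2 :
  a != b -> b != c -> a != c -> p1 != r1 -> p2 != r2 ->
  (tperm p1 r1 * tperm e1 f1 = tperm a b * tperm b c)%g ->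
  (tperm p2 r2 * tperm e2 f2 = tperm a b * tperm b c)%g ->
  tperm p1 r1 != tperm a b -> tperm p2 r2 != tperm a b ->
  ell x < ell (x * tperm a b)%g -> ell (x * tperm a b)%g < ell (x * tperm a b * tperm b c)%g ->
  ell x < ell (x * tperm p1 r1)%g -> ell (x * tperm p1 r1)%g < ell (x * tperm a b * tperm b c)%g ->
  ell x < ell (x * tperm p2 r2)%g -> ell (x * tperm p2 r2)%g < ell (x * tperm a b * tperm b c)%g ->
  tperm p1 r1 = tperm p2 r2.
Proof.
move=> ab bc ac pr1 pr2 E1 E2 n1 n2 h0 h0' h1 h1' h2 h2'.
have [Q1 Q2] := perm_eq3 ab bc ac.
have Y1 : (x * tperm a b * tperm b c = x * tperm b c * tperm a c)%g by rewrite -!mulgA Q1.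
have Y2 : (x * tperm a b * tperm b c = x * tperm a c * tperm a b)%g by rewrite -!mulgA Q2.
have D : forall p r e f, p != r -> (tperm p r * tperm e f = tperm a b * tperm b c)%g ->
   tperm p r != tperm a b -> tperm p r = tperm b c \/ tperm p r = tperm a c.
  move=> p r e f pr E n0; case: (cand_share ab bc ac pr E) => h; first by rewrite h eqxx in n0.
  - by left. - by right.
have D1 := D _ _ _ _ pr1 E1 n1.
have D2 := D _ _ _ _ pr2 E2 n2.
case: D1 => d1; case: D2 => d2; rewrite ?d1 ?d2 //;
  rewrite ?d1 ?d2 in h1 h1' h2 h2'.
- rewrite Y1 in h1'; rewrite Y2 in h2'.
  by case: (share_contra ab bc ac h0 h0' h1 h1' h2 h2').
- rewrite Y2 in h1'; rewrite Y1 in h2'.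
  by case: (share_contra ab bc ac h0 h0' h2 h2' h1 h1').
Qed.

Lemma uniq2 x y z0 z1 z2 :
  bedge x z0 -> bedge z0 y -> bedge x z1 -> bedge z1 y -> bedge x z2 -> bedge z2 y ->
  z1 != z0 -> z2 != z0 -> z1 = z2.
Proof.
move=> /bedgeE[a [b [ab -> h0]]] /bedgeE[c [d [cd -> h0']]].
move=> /bedgeE[p1 [r1 [pr1 -> h1]]] /bedgeE[e1 [f1 [ef1 E1 h1']]].
move=> /bedgeE[p2 [r2 [pr2 -> h2]]] /bedgeE[e2 [f2 [ef2 E2 h2']]].
move=> n1 n2.
have G1 : (tperm p1 r1 * tperm e1 f1 = tperm a b * tperm c d)%g.
  by apply: (mulgI x); rewrite !mulgA E1.
have G2 : (tperm p2 r2 * tperm e2 f2 = tperm a b * tperm c d)%g.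
  by apply: (mulgI x); rewrite !mulgA E2.
have m1 : tperm p1 r1 != tperm a b by apply: contra n1 => /eqP ->.
have m2 : tperm p2 r2 != tperm a b by apply: contra n2 => /eqP ->.
congr (x * _)%g.
have ba : b != a by rewrite eq_sym.
have dc : d != c by rewrite eq_sym.
have same : forall u, (x * u * u = x)%g -> ell x < ell (x * u)%g -> ell (x * u)%g < ell (x * u * u)%g -> False.
  by move=> u ->; lia.
have tt : forall u v : 'I_n, (x * tperm u v * tperm u v = x)%g by move=> u v; rewrite -mulgA tperm2 mulg1.
case: (eqVneq c a) => [Eca|ca]; [subst c| case: (eqVneq c b) => [Ecb|cb]; [subst c|]].
- case: (eqVneq d b) => [Edb|db]; first by subst d; case: (same _ (tt a b) h0 h0').
  have ad : a != d by rewrite eq_sym.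
  have bd : b != d by rewrite eq_sym.
  rewrite (tpermC a b) in G1 G2 m1 m2 h0 h0' h1' h2'.
  exact: (share_main ba ad bd pr1 pr2 G1 G2 m1 m2 h0 h0' h1 h1' h2 h2').
- case: (eqVneq d a) => [Eda|da]; first by subst d; rewrite (tpermC b a) in h0'; case: (same _ (tt a b) h0 h0').
  have ad : a != d by rewrite eq_sym.
  exact: (share_main ab cd ad pr1 pr2 G1 G2 m1 m2 h0 h0' h1 h1' h2 h2').
- case: (eqVneq d a) => [Eda|da]; [subst d | case: (eqVneq d b) => [Edb|db]; [subst d|]].
  + have ac : a != c by rewrite eq_sym.
    have bc : b != c by rewrite eq_sym.
    rewrite (tpermC a b) (tpermC c a) in G1 G2 m1 m2 h0 h0' h1' h2'.
    exact: (share_main ba ac bc pr1 pr2 G1 G2 m1 m2 h0 h0' h1 h1' h2 h2').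
  + have ac : a != c by rewrite eq_sym.
    rewrite (tpermC c b) in G1 G2 h0' h1' h2'.
    exact: (share_main ab dc ac pr1 pr2 G1 G2 m1 m2 h0 h0' h1 h1' h2 h2').
  + have ac : a != c by rewrite eq_sym.
    have ad : a != d by rewrite eq_sym.
    have bc : b != c by rewrite eq_sym.
    have bd : b != d by rewrite eq_sym.
    exact: (disj_main ab cd ac ad bc bd pr1 pr2 G1 G2 m1 m2).
Qed.

End B.


Lemma insubd_permE (T : finType) (f : {ffun T -> T}) : injectiveb f ->
  forall z, (insubd (1%g : {perm T}) f) z = f z.
Proof. move=> Hf z; rewrite -pvalE. have E := insubdK (1%g : {perm T}) Hf. simpl in E. by rewrite E. Qed.

Lemma ord_enum_lt n (A : {pred 'I_n}) (x0 : 'I_n) (Ax0 : x0 \in A) (a b : 'I_n) :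
  a \in A -> b \in A -> (Order.enum_rank_in Ax0 a < Order.enum_rank_in Ax0 b)%N = (a < b)%N.
Proof.
move=> Ha Hb.
have := Order.EnumVal.le_enum_rank_in (@Order.TotalTheory.le_total _ 'I_n) Ax0 Hb Ha.
rewrite !leEord => E.
by rewrite !ltnNge E.
Qed.

Section Pattern.
Variables (n : nat) (u : {perm 'I_n}) (S : {set 'I_n}) (s0 : 'I_n).
Hypothesis Hs0 : s0 \in S.
Implicit Types (x y t : {perm 'I_n}) (p v a b : 'I_n).

Definition Pset : {set 'I_n} := [set p | u p \in S].
Lemma HP0 : (u^-1)%g s0 \in Pset.
Proof. by rewrite inE permKV. Qed.
Lemma cardP : #|Pset| = #|S|.
Proof.
have -> : Pset = u @^-1: S by apply/setP => p; rewrite !inE.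
exact: card_preimset (@perm_inj _ u).
Qed.

Definition kk := #|S|.
Definition ee (i : 'I_kk) : 'I_n := Order.enum_val i.
Definition einv (v : 'I_n) : 'I_kk := Order.enum_rank_in Hs0 v.
Definition ppi (i : 'I_kk) : 'I_n := Order.enum_val (cast_ord (esym cardP) i).
Definition piinv (p : 'I_n) : 'I_kk := cast_ord cardP (Order.enum_rank_in HP0 p).

Lemma ee_in i : ee i \in S. Proof. exact: Order.EnumVal.enum_valP. Qed.
Lemma eeK i : einv (ee i) = i. Proof. exact: Order.EnumVal.enum_valK_in. Qed.
Lemma einvK v : v \in S -> ee (einv v) = v. Proof. exact: Order.EnumVal.enum_rankK_in. Qed.
Lemma ppi_in i : ppi i \in Pset. Proof. exact: Order.EnumVal.enum_valP. Qed.
Lemma ppiK i : piinv (ppi i) = i.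
Proof. by apply: val_inj; rewrite /piinv /ppi /= Order.EnumVal.enum_valK_in. Qed.
Lemma piinvK p : p \in Pset -> ppi (piinv p) = p.
Proof.
move=> Hp; rewrite /ppi /piinv.
have -> : cast_ord (esym cardP) (cast_ord cardP (Order.enum_rank_in HP0 p)) = Order.enum_rank_in HP0 p.
  by apply: val_inj.
exact: Order.EnumVal.enum_rankK_in.
Qed.
Lemma einv_lt a b : a \in S -> b \in S -> (einv a < einv b)%N = (a < b)%N.
Proof. exact: ord_enum_lt. Qed.
Lemma piinv_lt a b : a \in Pset -> b \in Pset -> (piinv a < piinv b)%N = (a < b)%N.
Proof. move=> Ha Hb; rewrite /piinv /=; exact: ord_enum_lt. Qed.
Lemma einv_inj a b : a \in S -> b \in S -> einv a = einv b -> a = b.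
Proof. by move=> Ha Hb E; rewrite -(einvK Ha) -(einvK Hb) E. Qed.

Definition inV (x : {perm 'I_n}) := [forall p, (u p \notin S) ==> (x p == u p)].

Lemma inVP x : reflect (forall p, p \notin Pset -> x p = u p) (inV x).
Proof.
apply: (iffP forallP) => H p.
  by move=> Hp; apply/eqP; move: (H p); rewrite inE in Hp; rewrite Hp.
by apply/implyP => Hp; apply/eqP; apply: H; rewrite inE.
Qed.

Lemma V1 x p : inV x -> p \in Pset -> x p \in S.
Proof.
move=> /inVP Vx Hp; apply/negPn/negP => Hn.
set p' := (u^-1)%g (x p).
have Hp' : p' \notin Pset by rewrite inE /p' permKV.
have : x p' = x p by rewrite Vx // /p' permKV.
move/perm_inj => E; by move: Hp; rewrite -E (negbTE Hp').
Qed.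

Lemma V3 x v : inV x -> v \notin S -> (x^-1)%g v = (u^-1)%g v.
Proof.
move=> /inVP Vx Hv.
have H : (u^-1)%g v \notin Pset by rewrite inE permKV.
by rewrite -{1}(permKV u v) -(Vx _ H) permK.
Qed.

Lemma V4 x v : inV x -> v \in S -> (x^-1)%g v \in Pset.
Proof.
move=> /inVP Vx Hv; apply/negPn/negP => Hn.
have := Vx _ Hn; rewrite permKV => E.
by move: Hn; rewrite inE -E Hv.
Qed.

Definition fixS (t : {perm 'I_n}) := forall v, v \notin S -> t v = v.

Lemma fixS_in t v : fixS t -> v \in S -> t v \in S.
Proof.
move=> Ht Hv; apply/negPn/negP => Hn.
have := Ht _ Hn; move/perm_inj => E; by move: Hn; rewrite E Hv.
Qed.

Lemma label_fix x y : inV x -> inV y -> fixS (blabel x y).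
Proof.
move=> Vx Vy v Hv; rewrite /blabel permM (V3 Vx Hv).
move/inVP: Vy => ->; first by rewrite permKV.
by rewrite inE permKV.
Qed.

Definition phi_f (x : {perm 'I_n}) : {ffun 'I_kk -> 'I_kk} := [ffun i => einv (x (ppi i))].
Definition phi (x : {perm 'I_n}) : {perm 'I_kk} := insubd (1%g : {perm 'I_kk}) (phi_f x).

Lemma phiE x i : inV x -> phi x i = einv (x (ppi i)).
Proof.
move=> Vx; rewrite insubd_permE ?ffunE //.
apply/injectiveP => i1 i2; rewrite !ffunE => E.
have := einv_inj (V1 Vx (ppi_in i1)) (V1 Vx (ppi_in i2)) E.
by move/perm_inj => E2; rewrite -(ppiK i1) -(ppiK i2) E2.
Qed.

Lemma phiVE x j : inV x -> (phi x)^-1%g j = piinv ((x^-1)%g (ee j)).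
Proof.
move=> Vx; apply: (@perm_inj _ (phi x)); rewrite permKV phiE //.
by rewrite piinvK ?V4 ?ee_in // permKV eeK.
Qed.

Lemma phi_inj x y : inV x -> inV y -> phi x = phi y -> x = y.
Proof.
move=> Vx Vy E; apply/permP => p.
case: (boolP (p \in Pset)) => Hp.
  have := congr1 (fun s : {perm 'I_kk} => s (piinv p)) E; rewrite /= !phiE // piinvK //.
  exact: einv_inj (V1 Vx Hp) (V1 Vy Hp).
move/inVP: Vx => Vx; move/inVP: Vy => Vy; by rewrite Vx ?Vy.
Qed.

Definition psi_f (s : {perm 'I_kk}) : {ffun 'I_n -> 'I_n} :=
  [ffun p => if p \in Pset then ee (s (piinv p)) else u p].
Definition psi (s : {perm 'I_kk}) : {perm 'I_n} := insubd (1%g : {perm 'I_n}) (psi_f s).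

Lemma psiE s p : psi s p = if p \in Pset then ee (s (piinv p)) else u p.
Proof.
rewrite insubd_permE ?ffunE //.
clear p; apply/injectiveP => p q; rewrite !ffunE.
case: (boolP (p \in Pset)) => Hp; case: (boolP (q \in Pset)) => Hq.
- move=> E; have := congr1 einv E; rewrite !eeK => /perm_inj E2.
  by rewrite -(piinvK Hp) -(piinvK Hq) E2.
- by move=> E; move: Hq; rewrite inE -E ee_in.
- by move=> E; move: Hp; rewrite inE E ee_in.
- exact: perm_inj.
Qed.

Lemma psi_V s : inV (psi s).
Proof. by apply/inVP => p Hp; rewrite psiE (negbTE Hp). Qed.

Lemma phi_psi s : phi (psi s) = s.
Proof.
apply/permP => i; rewrite phiE ?psi_V // psiE ppi_in ppiK eeK //.
Qed.

Definition g_f (t : {perm 'I_n}) : {ffun 'I_kk -> 'I_kk} := [ffun j => einv (t (ee j))].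
Definition gg (t : {perm 'I_n}) : {perm 'I_kk} := insubd (1%g : {perm 'I_kk}) (g_f t).

Lemma ggE t j : fixS t -> gg t j = einv (t (ee j)).
Proof.
move=> Ht; rewrite insubd_permE ?ffunE //.
apply/injectiveP => i1 i2; rewrite !ffunE => E.
have := einv_inj (fixS_in Ht (ee_in i1)) (fixS_in Ht (ee_in i2)) E.
by move/perm_inj => E2; rewrite -(eeK i1) -(eeK i2) E2.
Qed.

Lemma gg_inj t t' : fixS t -> fixS t' -> gg t = gg t' -> t = t'.
Proof.
move=> Ht Ht' E; apply/permP => v.
case: (boolP (v \in S)) => Hv; last by rewrite Ht ?Ht'.
have := congr1 (fun s : {perm 'I_kk} => s (einv v)) E; rewrite /= !ggE // einvK //.
exact: einv_inj (fixS_in Ht Hv) (fixS_in Ht' Hv).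
Qed.

Lemma label_phi x y : inV x -> inV y -> blabel (phi x) (phi y) = gg (blabel x y).
Proof.
move=> Vx Vy; apply/permP => j.
rewrite ggE; last exact: label_fix.
rewrite /blabel !permM phiVE // phiE // piinvK ?V4 ?ee_in //.
Qed.

Lemma gg_tperm a b : a \in S -> b \in S -> gg (tperm a b) = tperm (einv a) (einv b).
Proof.
move=> Ha Hb.
have Hf : fixS (tperm a b).
  move=> v Hv; rewrite tpermD //; apply: contraNneq Hv => <- //.
apply/permP => j; rewrite ggE // !tpermE'.
have Ea : (ee j == a) = (j == einv a).
  apply/eqP/eqP => [<-|->]; by rewrite ?eeK ?einvK.
have Eb : (ee j == b) = (j == einv b).
  apply/eqP/eqP => [<-|->]; by rewrite ?eeK ?einvK.
by rewrite Ea Eb; case: eqP => //; case: eqP => //; rewrite eeK.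
Qed.

Lemma transp_in t a b : fixS t -> t = tperm a b -> a != b -> a \in S /\ b \in S.
Proof.
move=> Ht E ab.
have Ha : a \in S.
  apply/negPn/negP => Hn; have := Ht _ Hn; rewrite E tpermL => /eqP; by rewrite eq_sym (negbTE ab).
have Hb : b \in S.
  apply/negPn/negP => Hn; have := Ht _ Hn; rewrite E tpermR => /eqP; by rewrite (negbTE ab).
by [].
Qed.

Lemma is_transp_gg t : fixS t -> is_transp (gg t) = is_transp t.
Proof.
move=> Ht; apply/idP/idP.
  move=> /existsP[c /existsP[d /andP[cd /eqP E]]].
  apply/existsP; exists (ee c); apply/existsP; exists (ee d).
  rewrite (inj_eq (@Order.EnumVal.enum_val_inj _ _ _)) cd /=.
  apply/eqP/permP => v.
  case: (boolP (v \in S)) => Hv.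
    rewrite -(einvK Hv) -(einvK (fixS_in Ht (ee_in (einv v)))).
    rewrite -ggE // E !tpermE' !(inj_eq (@Order.EnumVal.enum_val_inj _ _ _)).
    by case: eqP => //; case: eqP.
  rewrite Ht // tpermD //; apply: contraNneq Hv => <-; exact: ee_in.
move=> /existsP[a /existsP[b /andP[ab /eqP E]]].
have [Ha Hb] := transp_in Ht E ab.
apply/existsP; exists (einv a); apply/existsP; exists (einv b).
rewrite E gg_tperm // eqxx andbT.
by apply: contra ab => /eqP/(einv_inj Ha Hb) ->.
Qed.

Lemma bedge_phi x y : inV x -> inV y -> bedge (phi x) (phi y) = bedge x y.
Proof.
move=> Vx Vy.
rewrite /bedge label_phi // is_transp_gg; last exact: label_fix.
case: (boolP (is_transp (blabel x y))) => //= /existsP[a /existsP[b /andP[ab /eqP E]]].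
have Ht := label_fix Vx Vy.
have [Ha Hb] := transp_in Ht E ab.
have Ey : y = (x * tperm a b)%g by rewrite -E /blabel mulKVg.
have Ey' : phi y = (phi x * tperm (einv a) (einv b))%g.
  by rewrite -gg_tperm // -E -label_phi // /blabel mulKVg.
have eab : einv a != einv b by apply: contra ab => /eqP/(einv_inj Ha Hb) ->.
rewrite Ey' ell_up // Ey ell_up // !phiVE // !einvK //.
by rewrite einv_lt // piinv_lt ?V4.
Qed.

End Pattern.

Lemma flipE h m (G : hpath h m) (i : 'I_h.+1) :
  flip i G = if (0 < i) && (i < h) then
    match [pick z | [&& z != G i, bedge (G (inord i.-1)) z & bedge z (G (inord i.+1))]] with
    | Some z => [ffun k => if k == i then z else G k]
    | None => G
    end
  else G.
Proof. by []. Qed.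

Section Flip.
Variables (n : nat) (u : {perm 'I_n}) (S : {set 'I_n}) (s0 : 'I_n).
Hypothesis Hs0 : s0 \in S.
Variable h : nat.
Implicit Types (x y z t : {perm 'I_n}) (G : hpath h n).

Local Notation inV := (inV u S).
Local Notation phi := (phi u Hs0).

Lemma inV_mid x y z : inV x -> inV y -> bedge x z -> bedge z y -> inV z.
Proof.
move=> Vx Vy /bedgeE[a [b [ab Ez l1]]] /bedgeE[c [d [cd Ey l2]]].
apply/(inVP _ _ _) => p Hp.
move/(inVP _ _ _): Vx => Vx; move/(inVP _ _ _): Vy => Vy.
set v := u p.
pose rho := (tperm a b * tperm c d)%g.
have H : forall w, tperm c d (tperm a b w) = rho w by move=> w; rewrite permM.
have Hrho : rho v = v.
  have : y p = (x * rho)%g p by rewrite Ey Ez mulgA.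
  by rewrite permM Vx // Vy.
case: (boolP (tperm a b v != v)) => Hm.
  have Hid := supp_tt H Hrho Hm.
  have : y = x.
    by apply/permP => w; rewrite Ey Ez -mulgA permM -/rho Hid.
  move=> Exy; move: l1 l2; rewrite Exy; lia.
by rewrite Ez permM Vx //; apply/eqP; rewrite negbK in Hm.
Qed.

Definition Vpath G := [forall k, inV (G k)].

Lemma src_val (k : 'I_h) : (src k : nat) = k. Proof. by []. Qed.
Lemma tgt_val (k : 'I_h) : (tgt k : nat) = k.+1. Proof. by rewrite /tgt /= /bump leq0n. Qed.

Lemma flip_inv G (i : 'I_h.+1) (Q : {perm 'I_n} -> Prop) :
  (forall k, Q (G k)) ->
  (0 < i -> i < h -> forall z, bedge (G (inord i.-1)) z -> bedge z (G (inord i.+1)) -> Q z) ->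
  forall k, Q (flip i G k).
Proof.
move=> HG Hz k; rewrite flipE.
case: ifP => // /andP[i0 ih].
case: pickP => // z /and3P[_ e1 e2].
by rewrite ffunE; case: eqP => // _; apply: Hz.
Qed.

Lemma flip_V G (i : 'I_h.+1) : Vpath G -> Vpath (flip i G).
Proof.
move=> /forallP VG; apply/forallP.
apply: (@flip_inv G i (fun x => inV x)) => // i0 ih z e1 e2.
exact: inV_mid (VG _) (VG _) e1 e2.
Qed.

Lemma flip_bpath G (i : 'I_h.+1) : is_bpath G -> is_bpath (flip i G).
Proof.
move=> BG; rewrite flipE.
case: ifP => // /andP[i0 ih].
case: pickP => // z /and3P[_ e1 e2].
move/forallP: BG => BG.
apply/forallP => k; rewrite !ffunE.
case: (eqVneq (src k) i) => [Es|Ns]; case: (eqVneq (tgt k) i) => [Et|Nt].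
- by have := tgt_val k; have := src_val k; rewrite Es Et; lia.
- have -> : tgt k = inord i.+1.
    by apply: ord_inj; rewrite tgt_val inordK -Es //= ltnS ltn_ord.
  exact: e2.
- have -> : src k = inord i.-1.
    by apply: ord_inj; rewrite inordK /= -Et tgt_val //=; have := ltn_ord k; lia.
  exact: e1.
- exact: BG.
Qed.

Lemma bpath_phi G : Vpath G -> is_bpath (mapP phi G) = is_bpath G.
Proof.
move=> /forallP VG; apply: eq_forallb => k.
by rewrite !ffunE bedge_phi.
Qed.

Lemma flip_comm G (i : 'I_h.+1) : Vpath G -> is_bpath G ->
  mapP phi (flip i G) = flip i (mapP phi G).
Proof.
move=> /forallP VG /forallP BG.
rewrite (flipE G) (flipE (mapP phi G)); case Hc: ((0 < i) && (i < h)); last by []. move/andP: Hc => [i0 ih].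
set X := G (inord i.-1); set Y := G (inord i.+1).
have VX : inV X by apply: VG.
have VY : inV Y by apply: VG.
have mE : forall j, mapP phi G j = phi (G j) by move=> j; rewrite ffunE.
rewrite !mE -/X -/Y.
have Hk : i.-1 < h by move: i0 ih; lia.
have eX : bedge X (G i).
  have := BG (Ordinal Hk).
  have -> : src (Ordinal Hk) = inord i.-1.
    by apply: ord_inj; rewrite inordK /=; move: ih; lia.
  have -> : tgt (Ordinal Hk) = i.
    by apply: ord_inj; rewrite tgt_val /=; move: i0; lia.
  by [].
have eY : bedge (G i) Y.
  have := BG (Ordinal ih).
  have -> : src (Ordinal ih) = i by apply: ord_inj.
  have -> : tgt (Ordinal ih) = inord i.+1.
    by apply: ord_inj; rewrite tgt_val inordK /=; move: ih; lia.
  by [].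
have Vi : inV (G i) by apply: VG.
case: pickP => [z /and3P[nz e1 e2] | Hn].
  have Vz := inV_mid VX VY e1 e2.
  case: pickP => [z' /and3P[nz' e1' e2'] | Hn'].
    have Vw := psi_V u Hs0 z'.
    have Pw : phi (psi u Hs0 z') = z' := phi_psi u Hs0 z'.
    move: nz' e1' e2'; rewrite -Pw !bedge_phi // => nz' e1' e2'.
    have nw : psi u Hs0 z' != G i by apply: contra nz' => /eqP ->.
    have Ezw := uniq2 eX eY e1 e2 e1' e2' nz nw.
    apply/ffunP => k; rewrite !ffunE; case: eqP => // _; by rewrite Ezw.
  have := Hn' (phi z); rewrite /= !bedge_phi // e1 e2 !andbT.
  have -> : (phi z != phi (G i)) = true.
    apply/negP => /eqP E; by move: nz; rewrite (phi_inj Vz Vi E) eqxx.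
  by [].
case: pickP => [z' /and3P[nz' e1' e2'] | Hn'] //.
have Vw := psi_V u Hs0 z'.
have Pw : phi (psi u Hs0 z') = z' := phi_psi u Hs0 z'.
move: nz' e1' e2'; rewrite -Pw !bedge_phi // => nz' e1' e2'.
have nw : psi u Hs0 z' != G i by apply: contra nz' => /eqP ->.
by have := Hn (psi u Hs0 z'); rewrite /= nw e1' e2'.
Qed.

End Flip.

Lemma connect_inv (T : finType) (e : rel T) (P : pred T) x y :
  P x -> (forall a b, P a -> e a b -> P b) -> connect e x y -> P y.
Proof.
move=> Px H /connectP[p pth ->]; elim: p x Px pth => //= b p IH a Pa /andP[eab pth].
exact: IH (H _ _ Pa eab) pth.
Qed.

Lemma connect_fwd (T U : finType) (e : rel T) (e' : rel U) (m : T -> U) (P : pred T) x y :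
  P x -> (forall a b, P a -> e a b -> P b /\ e' (m a) (m b)) -> connect e x y -> connect e' (m x) (m y).
Proof.
move=> Px H /connectP[p pth ->]; elim: p x Px pth => //= b p IH a Pa /andP[eab pth].
have [Pb e'ab] := H _ _ Pa eab.
apply: connect_trans (IH _ Pb pth); exact: connect1.
Qed.

Lemma connect_bwd (T U : finType) (e : rel T) (e' : rel U) (m : T -> U) (P : pred T) x y' :
  P x -> (forall a b', P a -> e' (m a) b' -> exists b, [/\ P b, e a b & b' = m b]) ->
  connect e' (m x) y' -> exists2 y, connect e x y & y' = m y.
Proof.
move=> Px H /connectP[p pth ->]; elim: p x Px pth => /= [|b' p IH] a Pa.
  by move=> _; exists a.
move=> /andP[eab pth].
have [b [Pb eab' Eb]] := H _ _ Pa eab.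
rewrite Eb in pth *.
have [y cy ->] := IH _ Pb pth.
by exists y => //; apply: connect_trans cy; exact: connect1.
Qed.

Section Main.
Variables (h n : nat) (n_gt0 : 0 < n) (u v : {perm 'I_n}) (G : hpath h n).
Hypothesis HG : G \in Ph h u v.

Definition lbl (H : hpath h n) (k : 'I_h) := blabel (H (src k)) (H (tgt k)).
Definition S0 : {set 'I_n} := [set w | [exists k : 'I_h, lbl G k w != w]].
Definition s0 : 'I_n := Ordinal n_gt0.
Definition SS : {set 'I_n} := s0 |: S0.
Lemma Hs0 : s0 \in SS. Proof. exact: setU11. Qed.

Local Notation inV := (inV u SS).
Local Notation Vpath := (Vpath u SS).
Local Notation phi := (phi u Hs0).
Local Notation gg := (gg Hs0).

Definition F := flip_orbit G.

Lemma HG' : [/\ is_bpath G, G ord0 = u & G ord_max = v].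
Proof. by move: HG; rewrite inE => /and3P[? /eqP ? /eqP ?]. Qed.

Lemma inV_mul x t : inV x -> fixS SS t -> inV (x * t)%g.
Proof.
move=> /(inVP _ _ _) Vx Ht; apply/(inVP _ _ _) => p Hp.
rewrite permM Vx // Ht //; by rewrite inE in Hp.
Qed.

Lemma G_V : Vpath G.
Proof.
have [BG G0 _] := HG'.
apply/forallP => i.
have : forall m (Hm : m < h.+1), inV (G (Ordinal Hm)).
  elim=> [|m IH] Hm.
    have -> : Ordinal Hm = ord0 by apply: ord_inj.
    by rewrite G0; apply/(inVP _ _ _).
  have Hk : m < h by [].
  have -> : Ordinal Hm = tgt (Ordinal Hk) by apply: ord_inj; rewrite tgt_val.
  have -> : G (tgt (Ordinal Hk)) = (G (src (Ordinal Hk)) * lbl G (Ordinal Hk))%g.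
    by rewrite /lbl /blabel mulKVg.
  apply: inV_mul.
    have -> : src (Ordinal Hk) = Ordinal (ltnW Hm) by apply: ord_inj.
    exact: IH.
  move=> w; rewrite !inE negb_or => /andP[_ Hn]; rewrite negb_exists in Hn.
  by move/forallP: Hn => /(_ (Ordinal Hk)); rewrite negbK => /eqP.
move=> /(_ i (ltn_ord i)); by have -> : Ordinal (ltn_ord i) = i by apply: ord_inj.
Qed.

Definition goodP := [pred H : hpath h n | Vpath H && is_bpath H].

Lemma flipstep_good a b : goodP a -> flipstep a b -> goodP b.
Proof.
move=> /andP[Va Ba] /existsP[i /and3P[_ _ /eqP ->]].
by rewrite /= (flip_V Hs0) // (flip_bpath Hs0).
Qed.

Lemma F_good H : H \in F -> goodP H.
Proof.
rewrite inE => c; apply: connect_inv c => //.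
  by have [BG _ _] := HG'; rewrite /= G_V BG.
exact: flipstep_good.
Qed.

Definition Fp := [set mapP phi H | H in F].

Lemma flipstep_fwd a b : goodP a -> flipstep a b -> goodP b /\ flipstep (mapP phi a) (mapP phi b).
Proof.
move=> Ga st; split; first exact: flipstep_good st.
move: st Ga => /existsP[i /and3P[i0 ih /eqP ->]] /andP[Va Ba].
apply/existsP; exists i; rewrite i0 ih /=.
by rewrite (flip_comm Hs0).
Qed.

Lemma flipstep_bwd a b' : goodP a -> flipstep (mapP phi a) b' ->
  exists b, [/\ goodP b, flipstep a b & b' = mapP phi b].
Proof.
move=> Ga /existsP[i /and3P[i0 ih /eqP ->]].
have st : flipstep a (flip i a) by apply/existsP; exists i; rewrite i0 ih eqxx.
exists (flip i a); split => //; first exact: flipstep_good st.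
by move: Ga => /andP[Va Ba]; rewrite (flip_comm Hs0).
Qed.

Lemma Fp_orbit : Fp = flip_orbit (mapP phi G).
Proof.
have GG : goodP G by have [BG _ _] := HG'; rewrite /= G_V BG.
apply/setP => H; rewrite inE; apply/imsetP/idP.
  move=> [H0 HF ->]; move: HF; rewrite inE => c.
  exact: connect_fwd GG flipstep_fwd c.
move=> c; have [H0 c0 ->] := connect_bwd GG flipstep_bwd c.
by exists H0; rewrite // inE.
Qed.

Lemma Fp_class : is_flipclass Fp.
Proof.
have [BG G0 Gm] := HG'.
exists (phi u), (phi v), (mapP phi G); split; last exact: Fp_orbit.
by rewrite inE bpath_phi ?G_V // BG !ffunE G0 Gm !eqxx.
Qed.


Lemma F_V H : H \in F -> forall k, inV (H k).
Proof. by move=> /F_good /andP[/forallP V _]. Qed.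

Lemma fverts_V x : x \in fverts F -> inV x.
Proof. by rewrite inE => /existsP[H /andP[HF /existsP[k /eqP <-]]]; apply: F_V. Qed.

Lemma flabels_fix t : t \in flabels F -> fixS SS t.
Proof.
rewrite inE => /existsP[H /andP[HF /existsP[k /eqP ->]]].
by apply: label_fix; apply: F_V.
Qed.

Lemma lt_neq n' (a b : 'I_n') : a < b -> a != b.
Proof. by move=> ab; apply: contraTneq ab => ->; rewrite ltnn. Qed.

Lemma iso : flip_iso F Fp.
Proof.
exists phi, gg; split.
- split.
  + move=> x y /fverts_V Vx /fverts_V Vy; exact: phi_inj.
  + apply/setP => x'; apply/imsetP/idP.
    * move=> [x Hx ->]; move: Hx; rewrite inE => /existsP[H /andP[HF /existsP[k /eqP Hk]]].
      rewrite inE; apply/existsP; exists (mapP phi H); rewrite imset_f //=.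
      by apply/existsP; exists k; rewrite ffunE Hk.
    * rewrite inE => /existsP[H' /andP[/imsetP[H HF ->] /existsP[k /eqP Hk]]].
      exists (H k); first by rewrite inE; apply/existsP; exists H; rewrite HF; apply/existsP; exists k.
      by rewrite -Hk ffunE.
- split; last by [].
  move=> H1 H2 HF1 HF2 E; apply/ffunP => k; have := congr1 (fun X : {ffun 'I_h.+1 -> {perm 'I_(kk SS)}} => X k) E; rewrite !ffunE.
  by apply: phi_inj; apply: F_V.
- move=> H HF i i0 ih; have /andP[VH BH] := F_good HF.
  by rewrite (flip_comm Hs0).
- split.
  + move=> t1 t2 /flabels_fix f1 /flabels_fix f2; exact: gg_inj.
  + apply/setP => t'; apply/imsetP/idP.
    * move=> [t Ht ->]; move: Ht; rewrite inE => /existsP[H /andP[HF /existsP[k /eqP Hk]]].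
      rewrite inE; apply/existsP; exists (mapP phi H); rewrite imset_f //=.
      by apply/existsP; exists k; rewrite !ffunE Hk label_phi //; apply: F_V.
    * rewrite inE => /existsP[H' /andP[/imsetP[H HF ->] /existsP[k /eqP Hk]]].
      exists (blabel (H (src k)) (H (tgt k))).
        by rewrite inE; apply/existsP; exists H; rewrite HF; apply/existsP; exists k.
      by rewrite Hk !ffunE label_phi //; apply: F_V.
- split.
  + by move=> H HF k; rewrite !ffunE label_phi //; apply: F_V.
  + move=> t1 t2 Ht1 Ht2.
    move=> /existsP[a /existsP[b /existsP[c /existsP[d /and5P[ab cd /eqP E1 /eqP E2 lex]]]]].
    have [Ha Hb] := transp_in (flabels_fix Ht1) E1 (lt_neq ab).
    have [Hc Hd] := transp_in (flabels_fix Ht2) E2 (lt_neq cd).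
    apply/existsP; exists (einv Hs0 a); apply/existsP; exists (einv Hs0 b).
    apply/existsP; exists (einv Hs0 c); apply/existsP; exists (einv Hs0 d).
    rewrite E1 E2 !gg_tperm // !einv_lt // ab cd !eqxx /=.
    have -> : (einv Hs0 a == einv Hs0 c) = (a == c).
      by apply/eqP/eqP => [/(einv_inj Ha Hc)|->].
    exact: lex.
Qed.

Definition pickm (k : 'I_h) : 'I_n := odflt s0 [pick w | lbl G k w != w].
Definition abf (kb : 'I_h * bool) : 'I_n := if kb.2 then lbl G kb.1 (pickm kb.1) else pickm kb.1.

Lemma moved2 (a b w w' : 'I_n) : tperm a b w != w -> tperm a b w' != w' -> w = w' \/ w = tperm a b w'.
Proof.
case: (tpermP a b w) => [->|->|]; case: (tpermP a b w') => [->|->|]; rewrite ?eqxx //;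
  by [left | right | move=> *; rewrite ?tpermL ?tpermR; [left|right]].
Qed.

Lemma card_S0 : #|S0| <= h * 2.
Proof.
have [BG _ _] := HG'.
have sub : S0 \subset [set abf kb | kb in predT].
  apply/subsetP => w; rewrite inE => /existsP[k Hk].
  have /andP[/existsP[a /existsP[b /andP[ab /eqP E]]] _] := (forallP BG) k.
  rewrite -/(lbl G k) in E.
  have Hp : lbl G k (pickm k) != pickm k.
    rewrite /pickm; case: pickP => [w' //|/(_ w)]; by rewrite /= Hk.
  rewrite E in Hk Hp.
  case: (moved2 Hk Hp) => Ew.
    by apply/imsetP; exists (k, false).
  by apply/imsetP; exists (k, true); rewrite //= /abf /= E.
apply: leq_trans (subset_leq_card sub) _.
apply: leq_trans (leq_imset_card _ _) _.
by apply: leq_trans (max_card _) _; rewrite card_prod card_ord card_bool.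
Qed.

Lemma card_SS : 0 < #|SS| <= (2 * h).+1.
Proof.
apply/andP; split; first by apply/card_gt0P; exists s0; exact: Hs0.
rewrite cardsU1; have := card_S0; case: (s0 \in S0) => /=; lia.
Qed.

End Main.

Definition flipb h k (F : {set hpath h k}) : bool :=
  [exists u : {perm 'I_k}, exists v : {perm 'I_k}, exists G : hpath h k,
     (G \in Ph h u v) && (F == flip_orbit G)].

Lemma flipbP h k (F : {set hpath h k}) : reflect (is_flipclass F) (flipb F).
Proof.
apply: (iffP idP).
  move=> /existsP[u /existsP[v /existsP[G /andP[HG /eqP E]]]].
  by exists u, v, G.
move=> [u [v [G [HG E]]]].
by apply/existsP; exists u; apply/existsP; exists v; apply/existsP; exists G; rewrite HG E eqxx.
Qed.

Definition reps h : seq {k : nat & {set hpath h k}} :=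
  flatten [seq [seq Tagged (fun k => {set hpath h k}) F | F <- enum {set hpath h k} & flipb F]
          | k <- iota 1 (2 * h).+1].

Theorem corollary6p13 (h : nat) :
  exists (K : nat) (ns : 'I_K -> nat)
         (R : forall j : 'I_K, {set {ffun 'I_h.+1 -> {perm 'I_(ns j)}}}),
    (forall j : 'I_K, 0 < ns j /\ is_flipclass (R j)) /\
    (forall (n : nat) (F : {set {ffun 'I_h.+1 -> {perm 'I_n}}}),
        0 < n -> is_flipclass F -> exists j : 'I_K, flip_iso F (R j)).
Proof.
pose s := reps h.
pose x0 := Tagged (fun k => {set hpath h k}) (set0 : {set hpath h 0}).
exists (size s), (fun j => tag (nth x0 s j)), (fun j => tagged (nth x0 s j)).
split.
  move=> j; have : nth x0 s j \in s := mem_nth x0 (ltn_ord j).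
  move: (nth x0 s j) => p.
  rewrite /s /reps => /flattenP[l /seq.mapP[k Hk ->] /seq.mapP[F' HF' ->]] /=.
  move: Hk HF'; rewrite mem_iota mem_filter => /andP[k0 _] /andP[Hf _].
  by split => //; apply/flipbP.
move=> n F n0 [u [v [G [HG ->]]]].
have Hin : Tagged (fun k => {set hpath h k}) (Fp n0 u G) \in s.
  rewrite /s /reps; apply/flattenP.
  eexists; first by apply/seq.mapP; exists (kk (SS n0 G)) => //; rewrite mem_iota /kk; have := card_SS n0 HG; lia.
  apply/seq.mapP; exists (Fp n0 u G) => //.
  by rewrite mem_filter mem_enum andbT; apply/flipbP; exact: Fp_class HG.
have Hj : index (Tagged (fun k => {set hpath h k}) (Fp n0 u G)) s < size s by rewrite index_mem.
exists (Ordinal Hj) => /=.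
rewrite (nth_index x0 Hin) /=.
exact: iso HG.
Qed.
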